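(* Let $m\ge1$ and $n\ge1$ be integers, $m_1,\dots,m_n\ge1$ integers, $\alpha_0,\dots,\alpha_{m-1}$ nonnegative reals, $\gamma_1<\gamma_2<\cdots<\gamma_n$ nonnegative reals, and $\beta_k^{(j)}$ ($1\le j\le n$, $1\le k\le m_j$) positive reals. Let $$q(x)=x^m-\alpha_{m-1}x^{m-1}-\cdots-\alpha_1x-\alpha_0-\sum_{j=1}^n\sum_{k=1}^{m_j}\frac{\beta_k^{(j)}}{(x-\gamma_j)^k}.$$ Then $q$ has a real zero $R$ with $R>\gamma_n$. *)

(* Defs.v *)
From mathcomp Require Import all_boot all_order all_algebra.
From mathcomp Require Import reals.
Set Implicit Arguments. Unset Strict Implicit. Unset Printing Implicit Defensive.
Import Order.TTheory GRing.Theory Num.Theory.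
Local Open Scope ring_scope.

Definition qfun (R : realType) (m n : nat) (alpha : nat -> R)
  (mj : 'I_n -> nat) (gamma : 'I_n -> R) (beta : 'I_n -> nat -> R) (x : R) : R :=
  x ^+ m - \sum_(i < m) alpha i * x ^+ i
  - \sum_(j < n) \sum_(1 <= k < (mj j).+1) beta j k / (x - gamma j) ^+ k.

(* Main.v *)
Require Import Defs.
From mathcomp Require Import all_boot all_order all_algebra.
From mathcomp Require Import reals.
From mathcomp Require Import all_classical all_reals all_analysis.
From mathcomp Require Import ring lra.
Import Order.TTheory GRing.Theory Num.Theory.
Import numFieldNormedType.Exports.
Local Open Scope ring_scope.
Local Open Scope classical_set_scope.

Lemma cont_sum (R : realType) (I : Type) (s : seq I) (P : pred I) (F : I -> R -> R) (x : R) :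
  (forall i, P i -> {for x, continuous (F i)}) ->
  {for x, continuous (fun y => \sum_(i <- s | P i) F i y)}.
Proof.
move=> H; elim: s => [|a s IH].
  have -> : (fun y => \sum_(i <- [::] | P i) F i y) = (fun=> 0).
    by apply/funext => y; rewrite big_nil.
  exact: cst_continuous.
case Pa: (P a).
  have -> : (fun y => \sum_(i <- a :: s | P i) F i y) =
    (fun y => F a y + \sum_(i <- s | P i) F i y).
    by apply/funext => y; rewrite big_cons Pa.
  exact: continuousD (H a Pa) IH.
have -> : (fun y => \sum_(i <- a :: s | P i) F i y) =
    (fun y => \sum_(i <- s | P i) F i y).
  by apply/funext => y; rewrite big_cons Pa.
exact: IH.
Qed.

Lemma qcont (R : realType) (m n : nat) (alpha : nat -> R)
  (mj : 'I_n -> nat) (gamma : 'I_n -> R) (beta : 'I_n -> nat -> R) (x : R) :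
  (forall j, gamma j < x) -> {for x, continuous (qfun m alpha mj gamma beta)}.
Proof.
move=> hx; rewrite /qfun.
apply: continuousB; first apply: continuousB.
- exact: exprn_continuous.
- apply: cont_sum => i _; apply: continuousM; first exact: cst_continuous.
  exact: exprn_continuous.
- apply: cont_sum => j _; apply: cont_sum => k _.
  apply: continuousM; first exact: cst_continuous.
  apply: continuousV.
    by rewrite expf_neq0 // subr_eq0 gt_eqF.
  apply: (continuous_comp (f := fun y => y - gamma j) (g := fun z => z ^+ k)).
    apply: continuousB; [exact: cvg_id | exact: cst_continuous].
  exact: exprn_continuous.
Qed.

Theorem lemma3p7 (R : realType) (m n : nat) (alpha : nat -> R)
  (mj : 'I_n -> nat) (gamma : 'I_n -> R) (beta : 'I_n -> nat -> R)
  (hm : (1 <= m)%N) (hn : (0 < n)%N)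
  (hmj : forall j, (1 <= mj j)%N)
  (halpha : forall i, (i < m)%N -> 0 <= alpha i)
  (hgamma0 : forall j, 0 <= gamma j)
  (hgamma : forall i j : 'I_n, (i < j)%N -> gamma i < gamma j)
  (hbeta : forall j k, (1 <= k <= mj j)%N -> 0 < beta j k) :
  exists Rz : R,
    (forall jn : 'I_n, nat_of_ord jn = n.-1 -> gamma jn < Rz) /\ qfun m alpha mj gamma beta Rz = 0.
Proof.
have hn1 : (n.-1 < n)%N by rewrite prednK.
pose jn : 'I_n := Ordinal hn1.
pose g := gamma jn.
have gmax : forall j, gamma j <= g.
  move=> j; case: (ltnP j n.-1) => hj; first exact/ltW/hgamma.
  have -> : j = jn; last by [].
  apply/val_inj => /=; apply/eqP; rewrite eqn_leq hj andbT -ltnS prednK //.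
have g0 : 0 <= g := hgamma0 jn.
pose S1 x := \sum_(i < m) alpha i * x ^+ i.
pose T x j k := beta j k / (x - gamma j) ^+ k.
pose S2 x := \sum_(j < n) \sum_(1 <= k < (mj j).+1) T x j k.
have qE : forall x, qfun m alpha mj gamma beta x = x ^+ m - S1 x - S2 x by [].
have Tpos : forall x j k, g < x -> (1 <= k <= mj j)%N -> 0 < T x j k.
  move=> x j k gx hk; apply: divr_gt0; first exact: hbeta.
  by apply: exprn_gt0; rewrite subr_gt0 (le_lt_trans (gmax j)).
have S2in : forall x j, g < x -> 0 <= \sum_(1 <= k < (mj j).+1) T x j k.
  move=> x j gx; rewrite big_nat_cond; apply: sumr_ge0 => k /andP[/andP[hk1 hk2] _].
  by apply: ltW; apply: Tpos => //; rewrite hk1 /= -ltnS.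
have S2ge : forall x, g < x -> beta jn 1 / (x - g) <= S2 x.
  move=> x gx; rewrite /S2 (bigD1 jn) //= big_ltn ?ltnS ?hmj //.
  rewrite -addrA lerDl; apply: addr_ge0.
    rewrite big_nat_cond; apply: sumr_ge0 => k /andP[/andP[hk1 hk2] _].
    by apply: ltW; apply: Tpos => //; rewrite (ltnW hk1) /= -ltnS.
  by apply: sumr_ge0 => j _; apply: S2in.
have S1ge : forall x, 0 <= x -> 0 <= S1 x.
  move=> x x0; apply: sumr_ge0 => i _; apply: mulr_ge0; first exact: halpha.
  exact: exprn_ge0.
pose b1 := beta jn 1.
have b1p : 0 < b1 by apply: hbeta; rewrite leqnn hmj.
pose C := (g + 1) ^+ m + 1.
have Cp : 0 < C by rewrite ltr_wpDl // exprn_ge0 // addr_ge0.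
pose e := Num.min 1 (b1 / C).
have ep : 0 < e by rewrite lt_min ltr01 divr_gt0.
have e1 : e <= 1 by rewrite ge_min lexx.
have eC : e <= b1 / C by rewrite ge_min lexx orbT.
pose a := g + e.
have ga : g < a by rewrite /a ltrDl.
have qa : qfun m alpha mj gamma beta a < 0.
  rewrite qE.
  have h1 : a ^+ m < b1 / e.
    apply: (le_lt_trans (y := (g + 1) ^+ m)).
      apply: lerXn2r; rewrite ?nnegrE.
      - exact: addr_ge0 g0 (ltW ep).
      - exact: addr_ge0 g0 ler01.
      - by rewrite lerD2l.
    rewrite ler_pdivlMr // mulrC -ler_pdivlMr // in eC.
    apply: lt_le_trans eC; rewrite /C ltrDl ltr01 //.
  have h2 : b1 / e <= S2 a by have := S2ge a ga; rewrite /a addrC addKr.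
  have h3 := S1ge a (ltW (le_lt_trans g0 ga)).
  rewrite -addrA -opprD subr_lt0; apply: (lt_le_trans h1).
  by apply: (le_trans h2); rewrite lerDr.
pose A := \sum_(i < m) alpha i.
pose B := \sum_(j < n) \sum_(1 <= k < (mj j).+1) beta j k.
have A0 : 0 <= A by apply: sumr_ge0 => i _; apply: halpha.
have B0 : 0 <= B.
  apply: sumr_ge0 => j _; rewrite big_nat_cond; apply: sumr_ge0 => k /andP[/andP[hk1 hk2] _].
  by apply: ltW; apply: hbeta; rewrite hk1 /= -ltnS.
pose b := g + 2 + A + B.
have gb1 : g + 1 <= b.
  by rewrite /b -!addrA lerD2l lerDl !addr_ge0.
have b1le : 1 <= b by apply: le_trans gb1; rewrite lerDr.
have ab : a <= b by apply: le_trans gb1; rewrite lerD2l.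
have qb : 0 < qfun m alpha mj gamma beta b.
  rewrite qE.
  have h1 : S1 b <= A * b ^+ m.-1.
    rewrite /A mulr_suml; apply: ler_sum => i _; apply: ler_wpM2l; first exact: halpha.
    by apply: ler_weXn2l => //; rewrite -ltnS prednK.
  have h2 : S2 b <= B.
    apply: ler_sum => j _; rewrite big_nat_cond [X in _ <= X]big_nat_cond.
    apply: ler_sum => k /andP[/andP[hk1 hk2] _].
    have d1 : 1 <= b - gamma j.
      rewrite lerBrDr.
      by apply: le_trans gb1; rewrite addrC lerD2r gmax.
    rewrite /T ler_pdivrMr; last by apply: exprn_gt0; apply: lt_le_trans d1.
    apply: ler_peMr; last exact: exprn_ege1.
    by apply: ltW; apply: hbeta; rewrite hk1 /= -ltnS.
  have h3 : b - A - B <= b ^+ m - A * b ^+ m.-1 - B.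
    rewrite lerD2r.
    have -> : b ^+ m = b * b ^+ m.-1 by rewrite -exprS prednK.
    rewrite -mulrBl.
    apply: ler_peMr; last exact: exprn_ege1.
    rewrite subr_ge0 /b.
    apply: (@le_trans _ _ (g + 2 + A)).
    - by rewrite lerDr addr_ge0.
    - by rewrite lerDl.
  have h4 : 0 < b - A - B.
    by rewrite /b; lra.
  apply: (lt_le_trans h4); apply: (le_trans h3).
  by rewrite lerB // lerB.
have cont : {within `[a, b], continuous (qfun m alpha mj gamma beta)}.
  apply: continuous_in_subspaceT => x.
  move=> /set_mem xab; have ax : a <= x by rewrite (itvP xab).
  apply: qcont => j; apply: (le_lt_trans (gmax j)); exact: (lt_le_trans ga).
have hv : Num.min (qfun m alpha mj gamma beta a) (qfun m alpha mj gamma beta b) <= 0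
    <= Num.max (qfun m alpha mj gamma beta a) (qfun m alpha mj gamma beta b).
  by rewrite ge_min le_max (ltW qa) (ltW qb) orbT.
have [c cab qc] := IVT ab cont hv.
exists c; split => //.
move=> j' hj'; have -> : j' = jn by apply: val_inj.
have ac : a <= c by rewrite (itvP cab).
exact: (lt_le_trans ga).
Qed.
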